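(* Let $\lambda\in\mathbf R$, $\mu>0$, and let $\psi\in H(\mathbf R)$ satisfy $1-\psi(x)\sim Ce^{\nu x}$ as $x\to-\infty$ for some $C>0,\nu>0$. Let $u$ be the weak solution of $u_t=-\lambda u_x+\mu(u^2-u)$, $u(0,\cdot)=\psi$, namely $u(t,x)=\frac{\psi(x-\lambda t)e^{-\mu t}}{1-\psi(x-\lambda t)+\psi(x-\lambda t)e^{-\mu t}}$. Put $v=\lambda-\mu/\nu$ and $w_v(x)=\big(1+\exp(\frac{\mu}{\lambda-v}x)\big)^{-1}$. Then there exists $x_0\in\mathbf R$ such that for every $x\in\mathbf R$, $$|u(t,x)-w_v(x-x_0-vt)|\to0\quad(t\to\infty).$$
   Context: $H(\mathbf R)$ is the set of nonincreasing right-continuous functions $h:\mathbf R\to[0,1]$ with $h(-\infty)=1$, $h(+\infty)=0$. *)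

(* Defs.v *)
From Stdlib Require Import Reals.
From Coquelicot Require Import Coquelicot.
Open Scope R_scope.

Definition in_H (h : R -> R) : Prop :=
  (forall x y, x <= y -> h y <= h x) /\
  (forall x, 0 <= h x <= 1) /\
  (forall x eps, 0 < eps -> exists delta, 0 < delta /\
       forall y, x <= y < x + delta -> Rabs (h y - h x) < eps) /\
  is_lim h m_infty 1 /\
  is_lim h p_infty 0.

Definition u_sol (lambda mu : R) (psi : R -> R) (t x : R) : R :=
  let p := psi (x - lambda * t) in
  p * exp (- mu * t) / (1 - p + p * exp (- mu * t)).

Definition w_wave (lambda mu v : R) (x : R) : R :=
  / (1 + exp (mu / (lambda - v) * x)).

(* Main.v *)
Require Import Defs.
From Stdlib Require Import Reals Lra.
From Coquelicot Require Import Coquelicot.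
Open Scope R_scope.

Lemma div_le a b c d : 0<b -> 0<d -> a*d <= c*b -> a/b <= c/d.
Proof. intros. unfold Rdiv. apply Rmult_le_reg_r with (b*d). nra.
replace (a*/b*(b*d)) with (a*d) by (field; lra).
replace (c*/d*(b*d)) with (c*b) by (field;lra). lra. Qed.

Lemma div_pos a b : 0 <= a -> 0 < b -> 0 <= a/b.
Proof. intros. unfold Rdiv. apply Rmult_le_pos; [lra| left; apply Rinv_0_lt_compat; lra]. Qed.

Lemma bnd1 p q E K : 0<p -> 0<=q -> 0<E -> 0<K ->
  Rabs (p*E/(q+p*E) - E/(E+K)) <= Rabs (p*K - q)/(p*K).
Proof.
intros Hp Hq HE HK.
set (D := (q+p*E)*(E+K)).
assert (HD : 0 < D) by (unfold D; apply Rmult_lt_0_compat; nra).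
replace (p*E/(q+p*E) - E/(E+K)) with (E*(p*K-q)/D) by (unfold D; field; nra).
set (r := E*(p*K-q)/D).
assert (Hr : Rabs r * D = E * Rabs (p*K-q)).
{ rewrite <- (Rabs_pos_eq D) by lra. rewrite <- Rabs_mult.
  unfold r. replace (E * (p * K - q) / D * D) with (E*(p*K-q)) by (field; lra).
  rewrite Rabs_mult, Rabs_pos_eq by lra. reflexivity. }
assert (HDE : D >= E*(p*K)) by (unfold D; nra).
assert (H0 : 0 <= Rabs r) by apply Rabs_pos.
assert (H1 : Rabs r * (p*K) <= Rabs (p*K-q)) by nra.
unfold Rdiv. apply Rmult_le_reg_r with (p*K). nra.
rewrite Rmult_assoc, Rinv_l by nra. lra.
Qed.

Lemma bnd2 p q E K : 0<=p<=1 -> 0<q -> 0<E -> 0<K ->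
  Rabs (p*E/(q+p*E) - E/(E+K)) <= E/q + E/K.
Proof.
intros Hp Hq HE HK.
assert (u0 : 0 <= p*E/(q+p*E)) by (apply div_pos; nra).
assert (u1 : p*E/(q+p*E) <= E/q) by (apply div_le; [nra|lra|]; assert (0 <= E*q*(1-p)) by (apply Rmult_le_pos; nra); nra).
assert (w0 : 0 <= E/(E+K)) by (apply div_pos; nra).
assert (w1 : E/(E+K) <= E/K) by (apply div_le; nra).
apply Rabs_le. lra.
Qed.

Theorem mainTheorem11 (lambda mu : R) (psi : R -> R) (C nu : R) :
  0 < mu ->
  in_H psi ->
  0 < C -> 0 < nu ->
  (* 1 - psi(x) ~ C e^{nu x} as x -> -oo *)
  is_lim (fun x => (1 - psi x) / (C * exp (nu * x))) m_infty 1 ->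
  let v := lambda - mu / nu in
  exists x0 : R, forall x : R,
    is_lim (fun t => Rabs (u_sol lambda mu psi t x - w_wave lambda mu v (x - x0 - v * t)))
      p_infty 0.
Proof.
intros Hmu HH HC Hnu Hasym v.
destruct HH as [Hmono [H01 [_ [Hm _]]]].
apply is_lim_spec in Hasym. apply is_lim_spec in Hm.
assert (Hlt1 : forall z, psi z < 1).
{ intro z. destruct (Hasym (mkposreal (1/2) ltac:(lra))) as [M HM]. simpl in HM.
  set (y := Rmin M z - 1).
  assert (Hy : y < M) by (unfold y; generalize (Rmin_l M z); lra).
  specialize (HM y Hy). apply Rabs_def2 in HM. destruct HM as [HM1 HM2].
  assert (HK : 0 < C * exp (nu*y)) by (apply Rmult_lt_0_compat; [lra|apply exp_pos]).
  assert (0 < 1 - psi y).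
  { destruct (Rle_or_lt (1 - psi y) 0) as [Hn|Hn]; [|lra].
    assert ((1 - psi y) / (C * exp (nu * y)) <= 0).
    { unfold Rdiv. apply Rmult_le_0_r; [lra|left; apply Rinv_0_lt_compat; lra]. }
    lra. }
  assert (psi z <= psi y) by (apply Hmono; unfold y; generalize (Rmin_r M z); lra).
  lra. }
exists (- ln C / nu). intro x.
assert (Heq: forall t, u_sol lambda mu psi t x - w_wave lambda mu v (x - (- ln C/nu) - v*t) =
  psi (x - lambda*t) * exp(-mu*t)/((1-psi (x - lambda*t)) + psi (x - lambda*t)*exp(-mu*t))
   - exp(-mu*t)/(exp(-mu*t)+C*exp(nu*(x-lambda*t)))).
{ intro t. unfold u_sol, w_wave, v. f_equal.
  replace (mu/(lambda - (lambda - mu/nu)) * (x - - ln C/nu - (lambda - mu/nu)*t))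
    with ((nu*(x-lambda*t) + mu*t) + ln C) by (field; lra).
  rewrite exp_plus, exp_ln by auto. rewrite exp_plus.
  replace (-mu*t) with (-(mu*t)) by ring. rewrite exp_Ropp.
  assert (0 < exp (mu*t)) by apply exp_pos.
  assert (0 < exp (nu*(x-lambda*t))) by apply exp_pos.
  assert (0 < C * exp (nu * (x - lambda * t)) * exp (mu * t)) by
    (apply Rmult_lt_0_compat; [apply Rmult_lt_0_compat|]; lra).
  unfold Rdiv. field. split; lra. }
apply is_lim_spec. intro eps. simpl.
destruct (Rle_or_lt lambda 0) as [Hl|Hl].
-
  set (q0 := 1 - psi x). assert (Hq0 : 0 < q0) by (unfold q0; generalize (Hlt1 x); lra).
  set (K0 := C*exp(nu*x)). assert (HK0 : 0 < K0) by (unfold K0; generalize (exp_pos (nu*x)); nra).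
  set (S := /q0 + /K0).
  assert (HS : 0 < S) by (unfold S; generalize (Rinv_0_lt_compat _ Hq0) (Rinv_0_lt_compat _ HK0); lra).
  exists (Rmax 0 (S/(eps*mu))). intros t Ht.
  generalize (Rmax_l 0 (S/(eps*mu))) (Rmax_r 0 (S/(eps*mu))); intros Ht1 Ht2.
  rewrite Rminus_0_r, Rabs_Rabsolu, Heq.
  set (y := x - lambda*t).
  assert (Hyx : x <= y) by (unfold y; nra).
  set (p := psi y). set (E := exp(-mu*t)). set (K := C*exp(nu*y)).
  assert (HE : 0 < E) by apply exp_pos.
  assert (Hq : q0 <= 1 - p) by (unfold q0, p; generalize (Hmono _ _ Hyx); lra).
  assert (HK : K0 <= K).
  { unfold K, K0. apply Rmult_le_compat_l; [lra|]. 
    destruct (Req_dec (nu*x) (nu*y)) as [e|n]; [rewrite e; lra|].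
    left; apply exp_increasing; nra. }
  assert (Hp01 : 0 <= p <= 1) by apply H01.
  assert (Hp1 : 0 < 1 - p) by (unfold p; generalize (Hlt1 y); lra).
  assert (HKp : 0 < K) by lra.
  eapply Rle_lt_trans. apply bnd2; assumption.
  assert (E/(1-p) <= E/q0) by (apply div_le; nra).
  assert (E/K <= E/K0) by (apply div_le; nra).
  assert (HES : E/q0 + E/K0 = E*S) by (unfold S, Rdiv; ring).
  assert (Hexp : 1 + mu*t < exp (mu*t)) by (apply exp_ineq1; nra).
  assert (HEe : E * exp (mu*t) = 1).
  { unfold E. rewrite <- exp_plus. replace (-mu*t + mu*t) with 0 by ring. apply exp_0. }
  assert (Hteps : S < eps*mu*t).
  { assert (Heps : 0 < eps) by (destruct eps; auto).
    assert (0 < eps*mu) by nra.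
    assert (S/(eps*mu) * (eps*mu) = S) by (field; lra).
    assert (S/(eps*mu) * (eps*mu) < t * (eps*mu)) by (apply Rmult_lt_compat_r; lra).
    lra. }
  assert (E*S < eps).
  { assert (0 < eps) by (destruct eps; auto).
    assert (S < eps * exp (mu*t)) by nra. nra. }
  lra.
-
  set (d := Rmin eps 1 / 4).
  assert (Hd0 : 0 < d) by (unfold d; destruct eps; simpl; unfold Rmin; destruct Rle_dec; lra).
  assert (Hd1 : d <= 1/4) by (unfold d; generalize (Rmin_r eps 1); lra).
  assert (Hd2 : d <= eps/4) by (unfold d; generalize (Rmin_l eps 1); lra).
  destruct (Hasym (mkposreal d Hd0)) as [M1 HM1]. simpl in HM1.
  destruct (Hm (mkposreal d Hd0)) as [M2 HM2]. simpl in HM2.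
  set (M := Rmin M1 M2).
  exists ((x - M)/lambda). intros t Ht.
  rewrite Rminus_0_r, Rabs_Rabsolu, Heq.
  set (y := x - lambda*t).
  assert (Hy : y < M).
  { unfold y. assert ((x-M)/lambda * lambda = x - M) by (field; lra). nra. }
  assert (Hy1 : y < M1) by (generalize (Rmin_l M1 M2); unfold M in Hy; lra).
  assert (Hy2 : y < M2) by (generalize (Rmin_r M1 M2); unfold M in Hy; lra).
  specialize (HM1 y Hy1). specialize (HM2 y Hy2).
  set (p := psi y) in *. set (E := exp(-mu*t)). set (K := C*exp(nu*y)) in *.
  assert (HE : 0 < E) by apply exp_pos.
  assert (HK : 0 < K) by (unfold K; generalize (exp_pos (nu*y)); nra).
  apply Rabs_def2 in HM1. apply Rabs_def2 in HM2.
  set (r := (1-p)/K) in *.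
  assert (Hp1 : p <= 1) by (apply H01).
  eapply Rle_lt_trans. apply bnd1; try lra.
  assert (Hrk : p*K - (1-p) = K*(p - r)) by (unfold r; field; lra).
  rewrite Hrk, Rabs_mult, Rabs_pos_eq by lra.
  assert (Hpr : Rabs (p - r) < eps * p).
  { apply Rabs_def1; destruct eps as [e He]; simpl in *; nra. }
  assert (K * Rabs (p - r) < eps * (p*K)) by nra.
  apply Rmult_lt_reg_r with (p*K). nra.
  unfold Rdiv. rewrite Rmult_assoc, Rinv_l by nra. lra.
Qed.
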